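(* Let $\mathcal D$ be a distribution on $\mathcal X^k\times\mathbb R$, and let $\mathcal X=\mathcal X_{seen}\sqcup\mathcal X_{uns}$ where $\mathcal X_{seen}$ is the smallest set with $x\in\mathcal X_{seen}^k$ almost surely for $(x,y)\sim\mathcal D$. For any number of SGD steps $t$ and any step sizes $\eta_1,\dots,\eta_t>0$, and any $x_1,x_2\in\mathcal X_{uns}^k$, $$\mathbb E_{\theta^t}[f_{\mathrm{MLP}}(x_1;\theta^t)]=\mathbb E_{\theta^t}[f_{\mathrm{MLP}}(x_2;\theta^t)]$$ (indeed $f_{\mathrm{MLP}}(x_1;\theta^t)$ and $f_{\mathrm{MLP}}(x_2;\theta^t)$ have the same distribution), whenever these expectations exist.
   Context: $\mathcal X$ is a finite token alphabet with $m=|\mathcal X|$. The MLP with depth $L$, width $d$ and differentiable activation $\phi$ has weights $\theta=\{W_1,\dots,W_L,w\}$ with $W_1\in\mathbb R^{d\times km}$, $W_\ell\in\mathbb R^{d\times d}$ ($\ell\ge2$), $w\in\mathbb R^d$, and outputs $f_{\mathrm{MLP}}(x;\theta)=w^Tz_L(x;\theta)$ where $z_0(x)=(e_{x_1},\dots,e_{x_k})\in\mathbb R^{km}$ (concatenated one-hot encodings) and $z_\ell(x;\theta)=\phi(W_\ell z_{\ell-1}(x;\theta))$ elementwise for $\ell\ge1$. One-pass SGD: $\theta^0$ has independent Gaussian entries, i.i.d. within each of $W_1^0,\dots,W_L^0,w^0$; then $\theta^s=\theta^{s-1}-\eta_s\nabla_\theta(f_{\mathrm{MLP}}(x^s;\theta)-y^s)^2|_{\theta=\theta^{s-1}}$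 with fresh independent samples $(x^s,y^s)\sim\mathcal D$. *)

(* Defs.v *)
From HB Require Import structures.
From mathcomp Require Import all_boot all_order all_algebra.
From mathcomp Require Import all_classical all_reals all_analysis.
Set Implicit Arguments. Unset Strict Implicit. Unset Printing Implicit Defensive.
Import Order.TTheory GRing.Theory Num.Theory.
Local Open Scope ring_scope.
Local Open Scope classical_set_scope.

(** Token alphabet: a finite type [X] (so m = #|X|), with a witness [x0]
    (used only to equip the input space with a pointed/measurable structure).
    Inputs x in X^k are finite functions 'I_k -> X. *)
Definition inp (X : finType) (x0 : X) (k : nat) : Type := {ffun 'I_k -> X}.
HB.instance Definition _ (X : finType) (x0 : X) k := Finite.on (inp x0 k).
HB.instance Definition _ (X : finType) (x0 : X) k :=
  isPointed.Build (inp x0 k) [ffun=> x0].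
HB.instance Definition _ (X : finType) (x0 : X) k :=
  @isMeasurable.Build default_measure_display (inp x0 k) discrete_measurable
   discrete_measurable0 discrete_measurableC discrete_measurableU.

(** Index type of the parameters theta = {W_1, W_2..W_L, w}:
    - inl (inl (j, (i, a))) : entry (j, (i,a)) of W_1 in R^{d x km}, the column
      (i,a) being the position of coordinate a of the one-hot block e_{x_i};
    - inl (inr (l, (j, j'))) : entry (j, j') of W_{l+2}, l : 'I_(L-1);
    - inr j : entry j of w. *)
Definition pidx (X : finType) (k d L : nat) : finType :=
  (('I_d * ('I_k * X)) + ('I_L.-1 * ('I_d * 'I_d)) + 'I_d)%type.

Section MLP.
Variables (R : realType) (X : finType) (x0 : X) (k d L : nat) (phi : R -> R).
Notation P := (pidx X k d L).
Notation param := (P -> R).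

(** z_0(x) = (e_{x_1},...,e_{x_k}) in R^{km}. *)
Definition z0 (x : inp x0 k) (c : 'I_k * X) : R := ((x c.1 == c.2) : nat)%:R.

(** zh theta x n = z_{n+1}(x; theta). *)
Fixpoint zh (theta : param) (x : inp x0 k) (n : nat) : 'I_d -> R :=
  match n with
  | 0 => fun j => phi (\sum_(c : 'I_k * X) theta (inl (inl (j, c))) * z0 x c)
  | n'.+1 => fun j =>
      match (insub n' : option 'I_L.-1) with
      | Some l => phi (\sum_(j' : 'I_d) theta (inl (inr (l, (j, j')))) * zh theta x n' j')
      | None => 0
      end
  end.

Definition f_mlp (theta : param) (x : inp x0 k) : R :=
  \sum_(j : 'I_d) theta (inr j) * zh theta x L.-1 j.

Definition sqloss (z : inp x0 k * R) (theta : param) : R :=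
  (f_mlp theta z.1 - z.2) ^+ 2.

Definition grad (F : param -> R) (theta : param) (p : P) : R :=
  derive1 (fun s : R => F (fun q => theta q + (if q == p then s else 0))) 0.

Fixpoint sgd (theta0 : param) (eta : nat -> R) (smp : nat -> inp x0 k * R)
  (n : nat) : param :=
  match n with
  | 0 => theta0
  | n'.+1 => let th := sgd theta0 eta smp n' in
      fun p => th p - eta n * grad (sqloss (smp n)) th p
  end.

(** Per-block parameter of the Gaussian initialisation (i.i.d. within each
    of W_1, W_2, ..., W_L, w). *)
Definition blockwise (a1 : R) (ah : 'I_L.-1 -> R) (aw : R) (p : P) : R :=
  match p with
  | inl (inl _) => a1
  | inl (inr (l, _)) => ah l
  | inr _ => aw
  end.

End MLP.

(** X_seen: the smallest S with x in S^k almost surely (intersection of all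
    such S; the family is closed under intersection since X is finite). *)
Definition seen (R : realType) (X : finType) (x0 : X) (k : nat)
  (D : probability (inp x0 k * R)%type R) : {set X} :=
  [set a : X | [forall S : {set X},
     (D [set z : inp x0 k * R | forall i, z.1 i \in S] == 1%E) ==> (a \in S)]].

(* Main.v *)
Require Import Defs.
From HB Require Import structures.
From mathcomp Require Import all_boot all_order all_algebra.
From mathcomp Require Import all_classical all_reals all_analysis.
Import Order.TTheory GRing.Theory Num.Theory numFieldNormedType.Exports.
Local Open Scope ring_scope.
Local Open Scope classical_set_scope.

Notation mD := measurable_realfun.measurable_funD.
Notation mB := measurable_realfun.measurable_funB.
Notation mM := measurable_realfun.measurable_funM.

Section Alg.
Variables (R : realType) (X : finType) (x0 : X) (k d L : nat) (phi : R -> R).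
Variables (x1 x2 : inp x0 k).
Notation P := (pidx X k d L).

Definition sw (a b c : X) : X := if c == a then b else if c == b then a else c.

Lemma swD a b c : c != a -> c != b -> sw a b c = c.
Proof. by move=> ca cb; rewrite /sw (negPf ca) (negPf cb). Qed.

Lemma swR a b : sw a b b = a.
Proof. by rewrite /sw; case: (eqVneq b a) => [->|]; rewrite ?eqxx. Qed.

Lemma swL a b : sw a b a = b.
Proof. by rewrite /sw eqxx. Qed.

Lemma swK a b : involutive (sw a b).
Proof.
move=> c; case: (eqVneq c a) => [->|ca]; first by rewrite swL swR.
case: (eqVneq c b) => [->|cb]; first by rewrite swR swL.
by rewrite !swD.
Qed.

Definition tc (c : 'I_k * X) : 'I_k * X := (c.1, sw (x1 c.1) (x2 c.1) c.2).

Lemma tcK : involutive tc.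
Proof. by case=> i a; rewrite /tc /= swK. Qed.

Definition sigp (p : P) : P :=
  match p with
  | inl (inl jc) => inl (inl (jc.1, tc jc.2))
  | _ => p
  end.

Lemma sigpK : involutive sigp.
Proof. by case=> [[[j c]|//]|//] /=; rewrite tcK. Qed.

Definition swapx (x : inp x0 k) : inp x0 k := [ffun i => sw (x1 i) (x2 i) (x i)].

Lemma z0_tc (x : inp x0 k) c : @z0 R X x0 k (swapx x) (tc c) = @z0 R X x0 k x c.
Proof.
case: c => i a; rewrite /z0 /tc /swapx /= ffunE.
by rewrite (inj_eq (can_inj (swK _ _))).
Qed.

Lemma zh_sig (psi : P -> R) x n j :
  zh phi (psi \o sigp) x n j = zh phi psi (swapx x) n j.
Proof.
elim: n j => [|n IH] j /=.
  congr (phi _).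
  rewrite [RHS](reindex_inj (inv_inj tcK)) /=.
  by apply: eq_bigr => c _; rewrite z0_tc.
case: (insub n) => [l|//]; congr (phi _).
by apply: eq_bigr => j' _; rewrite IH.
Qed.

Lemma f_sig (psi : P -> R) x : f_mlp phi (psi \o sigp) x = f_mlp phi psi (swapx x).
Proof. by rewrite /f_mlp; apply: eq_bigr => j _; rewrite zh_sig. Qed.

Lemma grad_sig (F : (P -> R) -> R) (HF : forall psi, F (psi \o sigp) = F psi) psi p :
  grad F (psi \o sigp) p = grad F psi (sigp p).
Proof.
rewrite /grad; congr (derive1 _ 0); apply/funext => s.
rewrite -HF; congr F; apply/funext => q /=.
rewrite /comp sigpK.
have -> : (sigp q == p) = (q == sigp p).
  by rewrite -[in LHS](sigpK p) (inj_eq (can_inj sigpK)).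
by [].
Qed.

Lemma sgd_sig theta eta (smp : nat -> inp x0 k * R) n :
  (forall s, (1 <= s <= n)%N -> swapx (smp s).1 = (smp s).1) ->
  sgd phi (theta \o sigp) eta smp n = sgd phi theta eta smp n \o sigp.
Proof.
elim: n => [//|n IH] Hs /=.
rewrite IH; last by move=> s /andP[s1 sn]; apply: Hs; rewrite s1 ltnW.
apply/funext => p /=.
rewrite grad_sig // => psi.
by rewrite /sqloss f_sig Hs // leqnn.
Qed.

Lemma swapx2 : (forall i, x1 i != x2 i -> True) -> swapx x2 = x1.
Proof. by move=> _; apply/ffunP => i; rewrite ffunE swR. Qed.

End Alg.

Section Der.
Variables (R : realType).

Lemma der_comp (f0 g0 : R -> R) a : derivable f0 a 1 -> derivable g0 (f0 a) 1 ->
  derivable (g0 \o f0) a 1.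
Proof.
move=> /derivable1_diffP df /derivable1_diffP dg; apply/derivable1_diffP.
exact: differentiable_comp.
Qed.

Lemma der_sum (I : finType) (F : I -> R -> R) a :
  (forall i, derivable (F i) a 1) -> derivable (fun s => \sum_i F i s) a 1.
Proof.
move=> dF.
suff H : forall r : seq I, derivable (fun s => \sum_(i <- r) F i s) a 1 by apply: H.
elim => [|i r IH].
  have -> : (fun s => \sum_(i <- [::]) F i s) = cst 0.
    by apply/funext => s; rewrite big_nil.
  exact: derivable_cst.
have -> : (fun s => \sum_(j <- i :: r) F j s) = F i + (fun s => \sum_(j <- r) F j s).
  by apply/funext => s; rewrite big_cons.
exact: derivableD.
Qed.

Lemma der_mul (f g : R -> R) a : derivable f a 1 -> derivable g a 1 ->
  derivable (fun s => f s * g s) a 1.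
Proof. by move=> df dg; exact: (derivableM df dg). Qed.

Lemma der_add (f g : R -> R) a : derivable f a 1 -> derivable g a 1 ->
  derivable (fun s => f s + g s) a 1.
Proof. by move=> df dg; exact: (derivableD df dg). Qed.

Lemma der_cst (c : R) a : derivable (fun _ : R => c) a 1.
Proof. exact: derivable_cst. Qed.

Lemma der_id a : derivable (fun s : R => s) a 1.
Proof. exact: derivable_id. Qed.

Variables (X : finType) (x0 : X) (k d L : nat) (phi : R -> R).
Hypothesis Hphi : forall u, derivable phi u 1.
Notation P := (pidx X k d L).

Lemma zh_der (g : P -> R -> R) a (dg : forall q, derivable (g q) a 1) (x : inp x0 k) n j :
  derivable (fun s => zh phi (fun q => g q s) x n j) a 1.
Proof.
elim: n j => [|n IH] j /=.
  refine (@der_comp (fun s => \sum_c g (inl (inl (j, c))) s * @z0 R X x0 k x c) phi a _ (Hphi _)).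
  by apply: der_sum => c; apply: der_mul => //; exact: der_cst.
case: (insub n) => [l|]; last exact: der_cst.
apply: (@der_comp (fun s => \sum_j' g (inl (inr (l, (j, j')))) s * zh phi (fun q => g q s) x n j') phi a) => //.
by apply: der_sum => c; apply: der_mul.
Qed.

Lemma f_der (g : P -> R -> R) a (dg : forall q, derivable (g q) a 1) (x : inp x0 k) :
  derivable (fun s => f_mlp phi (fun q => g q s) x) a 1.
Proof.
rewrite /f_mlp; apply: der_sum => j; apply: der_mul => //; exact: zh_der.
Qed.

Lemma sqloss_der (z : inp x0 k * R) (theta : P -> R) p a :
  derivable (fun s => sqloss phi z (fun q => theta q + (if q == p then s else 0))) a 1.
Proof.
rewrite /sqloss.
have dg : forall q, derivable (fun s => theta q + (if q == p then s else 0)) a 1.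
  move=> q; apply: der_add; first exact: der_cst.
  by case: (q == p); [exact: der_id | exact: der_cst].
have df := f_der _ _ dg z.1.
rewrite /GRing.exp /=; apply: der_mul; apply: der_add => //; exact: der_cst.
Qed.

End Der.

Section Seq.
Variables (R : realType).

Lemma dnbhs_right (g : R -> R) (l : R) : g x @[x --> 0^'] --> l -> g x @[x --> 0^'+] --> l.
Proof.
move=> H U /H; rewrite /= !near_simpl /=. 
move=> h; rewrite near_withinE; move: h; rewrite near_withinE /=; apply: filterS => y Hy y0; apply: Hy.
by rewrite gt_eqF.
Qed.

Lemma der_seq (f : R -> R) : derivable f 0 1 ->
  (fun m : nat => m.+1%:R * (f (m.+1%:R^-1) - f 0)) @ \oo --> derive1 f 0.
Proof.
move=> df.
have H : (fun h : R => h^-1 *: ((f \o shift 0) (h *: 1) - f 0)) @ 0^' --> 'D_1 f 0.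
  exact: df.
have H2 := dnbhs_right _ _ H.
rewrite derive1E.
move/cvg_at_rightP : H2 => /(_ (fun n => n.+1%:R^-1)) H3.
have : (fun n : nat => n.+1%:R^-1 : R) @ \oo --> 0 by exact: cvg_harmonic.
move=> hc.
have := H3 (conj (fun n => harmonic_gt0 n) hc).
apply: cvg_trans; apply: near_eq_cvg; apply: nearW => n /=.
by rewrite invrK /= addr0 [_%:A]mulr1.
Qed.

End Seq.

Section Meas.
Variables (R : realType) (X : finType) (x0 : X) (k d L : nat) (phi : R -> R).
Hypothesis mphi : measurable_fun setT phi.
Notation P := (pidx X k d L).
Variables (dT : measure_display) (T : measurableType dT).

Lemma m_zh (psi : P -> T -> R) (mpsi : forall q, measurable_fun setT (psi q))
  (x : inp x0 k) n j :
  measurable_fun setT (fun w => zh phi (fun q => psi q w) x n j).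
Proof.
elim: n j => [|n IH] j /=.
  apply: (measurableT_comp mphi).
  apply: measurable_sum => c; apply: mM => //; exact: measurable_cst.
case: (insub n) => [l|]; last exact: measurable_cst.
apply: (measurableT_comp mphi).
by apply: measurable_sum => c; apply: mM.
Qed.

Lemma m_f (psi : P -> T -> R) (mpsi : forall q, measurable_fun setT (psi q))
  (x : inp x0 k) :
  measurable_fun setT (fun w => f_mlp phi (fun q => psi q w) x).
Proof.
rewrite /f_mlp; apply: measurable_sum => j; apply: mM => //; exact: m_zh.
Qed.

Lemma sum_ind (F : inp x0 k -> R) a : \sum_(x : inp x0 k) ((a == x)%:R * F x) = F a.
Proof.
rewrite (bigD1 a) //= eqxx mul1r big1 ?addr0 // => x xa.
by rewrite eq_sym (negPf xa) mul0r.
Qed.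

Lemma m_fvar (psi : P -> T -> R) (mpsi : forall q, measurable_fun setT (psi q))
  (xw : T -> inp x0 k) (mx : measurable_fun setT xw) :
  measurable_fun setT (fun w => f_mlp phi (fun q => psi q w) (xw w)).
Proof.
have -> : (fun w => f_mlp phi (fun q => psi q w) (xw w)) =
   (fun w => \sum_(x : inp x0 k) ((xw w == x)%:R * f_mlp phi (fun q => psi q w) x)).
  by apply/funext => w; rewrite sum_ind.
apply: measurable_sum => x; apply: mM; last exact: m_f.
apply: (measurableT_comp (f := fun y : inp x0 k => ((y == x)%:R : R))) => //.
Qed.

Lemma m_sqloss (psi : P -> T -> R) (mpsi : forall q, measurable_fun setT (psi q))
  (zw : T -> (inp x0 k * R)%type) (mz : measurable_fun setT zw) :
  measurable_fun setT (fun w => sqloss phi (zw w) (fun q => psi q w)).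
Proof.
rewrite /sqloss; apply: mM; apply: mB.
- by apply: m_fvar => //; exact: (measurableT_comp measurable_fst).
- exact: (measurableT_comp measurable_snd).
- by apply: m_fvar => //; exact: (measurableT_comp measurable_fst).
- exact: (measurableT_comp measurable_snd).
Qed.

End Meas.

Section MSgd.
Variables (R : realType) (X : finType) (x0 : X) (k d L : nat) (phi : R -> R).
Hypothesis Hphi : forall u, derivable phi u 1.
Notation P := (pidx X k d L).
Variables (dT : measure_display) (T : measurableType dT).
Variable (eta : nat -> R).

Lemma mphi : measurable_fun setT phi.
Proof.
apply: measurable_realfun.continuous_measurable_fun => u; apply: differentiable_continuous.
by apply/derivable1_diffP; exact: Hphi.
Qed.

Lemma m_sgd (th : P -> T -> R) (mth : forall q, measurable_fun setT (th q))
  (Z : nat -> T -> (inp x0 k * R)%type) t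
  (mZ : forall s, (1 <= s <= t)%N -> measurable_fun setT (Z s)) n :
  (n <= t)%N -> forall p,
  measurable_fun setT (fun w => sgd phi (fun q => th q w) eta (fun s => Z s w) n p).
Proof.
elim: n => [|n IH] nt p /=; first exact: mth.
have mth' : forall q, measurable_fun setT
   (fun w => sgd phi (fun q => th q w) eta (fun s => Z s w) n q).
  by apply: IH; exact: ltnW.
have mZn : measurable_fun setT (Z n.+1) by apply: mZ; rewrite nt.
apply: mB => //; apply: mM; first exact: measurable_cst.
rewrite /grad.
apply: (measurable_realfun.measurable_fun_cvg (h := fun m w => m.+1%:R * (sqloss phi (Z n.+1 w)
   (fun q => sgd phi (fun q => th q w) eta (fun s => Z s w) n q + (if q == p then m.+1%:R^-1 else 0)) -
   sqloss phi (Z n.+1 w)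
   (fun q => sgd phi (fun q => th q w) eta (fun s => Z s w) n q + (if q == p then 0 else 0))))).
- move=> m; apply: mM; first exact: measurable_cst.
  apply: mB; apply: m_sqloss => //; try exact: mphi; move=> q; apply: mD => //;
    exact: measurable_cst.
- move=> w _; apply: der_seq; exact: sqloss_der.
Qed.

End MSgd.

Lemma prob1_inter d (T : measurableType d) (R : realType) (Pr : probability T R)
  (A B : set T) : measurable A -> measurable B -> Pr A = 1%E -> Pr B = Pr (B `&` A).
Proof.
move=> mA mB PA.
rewrite (measureDI Pr mB mA).
rewrite [X in (X + _)%E](_ : _ = 0%E) ?add0e //.
apply/eqP; rewrite eq_le measure_ge0 andbT.
have : (Pr (B `\` A) <= Pr (~` A))%E.
  apply: le_measure; rewrite ?inE; [exact: measurableD|exact: measurableC|].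
  by move=> x [].
by rewrite probability_setC // PA subee.
Qed.

Section Main.
Variables (R : realType) (X : finType) (x0 : X) (k d L : nat) (phi : R -> R)
  (dO : measure_display) (Omega : measurableType dO) (Pr : probability Omega R)
  (D : probability (inp x0 k * R)%type R)
  (mu1 : R) (muh : 'I_L.-1 -> R) (muw : R) (sd1 : R) (sdh : 'I_L.-1 -> R) (sdw : R)
  (theta0 : pidx X k d L -> Omega -> R) (Z : nat -> Omega -> (inp x0 k * R)%type)
  (t : nat) (eta : nat -> R) (x1 x2 : inp x0 k).
Notation P := (pidx X k d L).
Hypothesis Hphi : forall u, derivable phi u 1.
Hypothesis mth : forall p, measurable_fun setT (theta0 p).
Hypothesis mZ : forall s, measurable_fun setT (Z s).
Hypothesis Hth : forall p (B : set R), measurable B ->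
     Pr (theta0 p @^-1` B) =
     normal_prob (@blockwise R X k d L mu1 muh muw p) (@blockwise R X k d L sd1 sdh sdw p) B.
Hypothesis HZ : forall s, (1 <= s <= t)%N -> forall B : set (inp x0 k * R)%type,
     measurable B -> Pr (Z s @^-1` B) = D B.
Hypothesis Hind : forall (A : pidx X k d L -> set R) (B : nat -> set (inp x0 k * R)%type),
     (forall p, measurable (A p)) -> (forall s, measurable (B s)) ->
     Pr ((\bigcap_(p in [set: pidx X k d L]) theta0 p @^-1` A p) `&`
         (\bigcap_(s in [set s | (1 <= s <= t)%N]) Z s @^-1` B s)) =
     ((\prod_(p : pidx X k d L) Pr (theta0 p @^-1` A p)) *
      (\prod_(1 <= s < t.+1) Pr (Z s @^-1` B s)))%E.
Hypothesis Hx1 : forall i, x1 i \notin seen D.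
Hypothesis Hx2 : forall i, x2 i \notin seen D.

Notation sg := (sigp X x0 k d L x1 x2).

Definition Y := ((P -> R) * (nat -> (inp x0 k * R)))%type.
Definition rectS (A : P -> set R) (B : nat -> set (inp x0 k * R)) : set Y :=
  [set y | (forall p, A p (y.1 p)) /\ (forall s, (1 <= s <= t)%N -> B s (y.2 s))].
Definition Rect : set (set Y) := [set E | exists A B,
  (forall p, measurable (A p)) /\ (forall s, measurable (B s)) /\ E = rectS A B].
Definition YT := g_sigma_algebraType Rect.

Definition PhiG (th : P -> Omega -> R) (w : Omega) : YT := (fun p => th p w, fun s => Z s w).

Lemma preimPhi th A B : PhiG th @^-1` rectS A B =
  (\bigcap_(p in [set: P]) th p @^-1` A p) `&`
  (\bigcap_(s in [set s | (1 <= s <= t)%N]) Z s @^-1` B s).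
Proof.
apply/seteqP; split => w /=.
- by move=> [HA HB]; split => [p _|s /= st]; [exact: HA | exact: HB].
- by move=> [HA HB]; split => [p|s st]; [exact: HA | exact: HB].
Qed.

Lemma mPhiG th (mt : forall p, measurable_fun setT (th p)) :
  measurable_fun setT (PhiG th).
Proof.
apply: (@measurability _ _ Omega YT setT (PhiG th) Rect); first by [].
move=> _ [E [A [B [mA [mB ->]]]] <-]; rewrite setTI preimPhi.
apply: measurableI.
  apply: fin_bigcap_measurable; first exact: finite_finset.
  by move=> p _; rewrite -[X in measurable X]setTI; exact: mt.
apply: bigcap_measurableType => s _.
by rewrite -[X in measurable X]setTI; exact: mZ.
Qed.


Definition mkmf (f : Omega -> YT) (mf : measurable_fun setT f) : {mfun Omega >-> YT} :=
  MeasurableFun.Pack (MeasurableFun.Class (isMeasurableFun.Build _ _ _ _ f mf)).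

Definition thS (p : P) := theta0 (sg p).

Lemma mthS p : measurable_fun setT (thS p).
Proof. exact: mth. Qed.

Lemma blockwise_sg (a : R) (b : 'I_L.-1 -> R) (c : R) p :
  @blockwise R X k d L a b c (sg p) = @blockwise R X k d L a b c p.
Proof. by case: p => [[[j [i a']]|[l jj]]|j]. Qed.

Lemma RectI : setI_closed Rect.
Proof.
move=> _ _ [A [B [mA [mB ->]]]] [A' [B' [mA' [mB' ->]]]].
exists (fun p => A p `&` A' p), (fun s => B s `&` B' s); split.
  by move=> p; exact: measurableI.
split; first by move=> s; exact: measurableI.
apply/seteqP; split => y /=.
- by move=> [[HA HB] [HA' HB']]; split => [p|s st]; split; auto.
- move=> [HA HB]; split; split.
  + by move=> p; case: (HA p).
  + by move=> s st; case: (HB s st).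
  + by move=> p; case: (HA p).
  + by move=> s st; case: (HB s st).
Qed.

Lemma RectT : Rect setT.
Proof.
exists (fun _ => setT), (fun _ => setT); split => //; split => //.
by apply/seteqP; split => y //=.
Qed.

Lemma prod_sg (A : P -> set R) : (forall p, measurable (A p)) ->
  (\prod_(p : P) Pr (theta0 p @^-1` A (sg p)))%E = (\prod_(p : P) Pr (theta0 p @^-1` A p))%E.
Proof.
move=> mA.
rewrite [RHS](reindex_inj (can_inj (@sigpK X x0 k d L x1 x2))) /=.
apply: eq_bigr => p _.
by rewrite !Hth // blockwise_sg [in RHS]blockwise_sg.
Qed.

Lemma law (E : set YT) : measurable E ->
  Pr (PhiG theta0 @^-1` E) = Pr (PhiG thS @^-1` E).
Proof.
move=> mE.
pose m1 := distribution Pr (mkmf _ (mPhiG _ mth)).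
pose m2 := distribution Pr (mkmf _ (mPhiG _ mthS)).
have agree : forall A, Rect A -> m1 A = m2 A.
  move=> _ [A [B [mA [mB ->]]]].
  rewrite /m1 /m2 /distribution /pushforward /=.
  have -> : PhiG thS @^-1` rectS A B = PhiG theta0 @^-1` rectS (fun p => A (sg p)) B.
    apply/seteqP; split => w /= [HA HB]; split => // p.
    - by have := HA (sg p); rewrite /PhiG /thS /= sigpK.
    - have := HA (sg p); rewrite /PhiG /thS /= sigpK; exact.
  rewrite !preimPhi !Hind //.
  by rewrite prod_sg.
have fin : forall n : nat, (m1 setT < +oo)%E.
  move=> _; rewrite /m1 /distribution /pushforward preimage_setT probability_setT.
  exact: ltry.
exact: (@measure_unique _ R YT Rect (fun _ => setT) erefl RectI (fun _ => RectT)
  (bigcup_const _ _) m1 m2 agree fin E mE).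
Qed.


Lemma mpre (dd : measure_display) (T : measurableType dd) (f : T -> R) (mf : measurable_fun setT f) (B : set R) :
  measurable B -> measurable (f @^-1` B).
Proof. by move=> mB; rewrite -[X in measurable X]setTI; exact: mf. Qed.

Lemma mcoord1 q : measurable_fun setT (fun y : YT => y.1 q).
Proof.
move=> _ Bm mBm; rewrite setTI; apply: sub_sigma_algebra.
exists (fun p => if p == q then Bm else setT), (fun _ => setT); split.
  by move=> p; case: ifP.
split => //; apply/seteqP; split => y /=.
- by move=> Hy; split => // p; case: eqP => [->|].
- by move=> [HA _]; have := HA q; rewrite eqxx.
Qed.

Lemma mcoord2 s : (1 <= s <= t)%N -> measurable_fun setT (fun y : YT => y.2 s).
Proof.
move=> st _ Bm mBm; rewrite setTI; apply: sub_sigma_algebra.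
exists (fun _ => setT), (fun s' => if s' == s then Bm else setT); split => //.
split; first by move=> s'; case: ifP.
apply/seteqP; split => y /=.
- by move=> Hy; split => // s' _; case: eqP => [->|].
- by move=> [_ HB]; have := HB s st; rewrite eqxx.
Qed.

Definition Hf (y : YT) : R := f_mlp phi (sgd phi (fun q => y.1 q) eta (fun s => y.2 s) t) x2.

Lemma mHf : measurable_fun setT Hf.
Proof.
rewrite /Hf.
apply: (@m_f _ _ _ _ _ _ phi (mphi _ _ Hphi) _ _ (fun q (y : YT) => sgd phi (fun q => y.1 q) eta (fun s => y.2 s) t q)).
move=> q.
apply: (@m_sgd _ _ _ _ _ _ phi Hphi _ _ eta (fun q (y : YT) => y.1 q) _ (fun s (y : YT) => y.2 s) t) => //.
- exact: mcoord1.
- exact: mcoord2.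
Qed.

Lemma mout (th : P -> Omega -> R) (mt : forall p, measurable_fun setT (th p)) (x : inp x0 k) :
  measurable_fun setT (fun w => f_mlp phi (sgd phi (fun p => th p w) eta (fun s => Z s w) t) x).
Proof.
apply: (@m_f _ _ _ _ _ _ phi (mphi _ _ Hphi) _ _ (fun q w => sgd phi (fun p => th p w) eta (fun s => Z s w) t q)).
move=> q.
by apply: (@m_sgd _ _ _ _ _ _ phi Hphi _ _ eta th mt Z t) => // s _; exact: mZ.
Qed.


Definition CS (S : {set X}) : set (inp x0 k * R)%type :=
  [set z : inp x0 k * R | forall i, z.1 i \in S].

Lemma mCS S : measurable (CS S).
Proof.
have -> : CS S = [set x : inp x0 k | forall i, x i \in S] `*` setT.
  by apply/seteqP; split => z /=; [move=> H; split|case].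
exact: measurableX.
Qed.

Lemma inter1 (r : seq {set X}) :
  D (\bigcap_(S in [set S | S \in r /\ D (CS S) = 1%E]) CS S) = 1%E.
Proof.
elim: r => [|a r IH].
  have -> : \bigcap_(S in [set S | S \in [::] /\ D (CS S) = 1%E]) CS S = setT.
    by apply/seteqP; split => // z _ S [].
  exact: probability_setT.
have mr : measurable (\bigcap_(S in [set S | S \in r /\ D (CS S) = 1%E]) CS S).
  by apply: fin_bigcap_measurable; [exact: finite_finset | move=> S _; exact: mCS].
case: (pselect (D (CS a) = 1%E)) => Ha.
  have -> : \bigcap_(S in [set S | S \in a :: r /\ D (CS S) = 1%E]) CS S =
     (\bigcap_(S in [set S | S \in r /\ D (CS S) = 1%E]) CS S) `&` CS a.
    apply/seteqP; split => z /=.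
    - move=> H; split; last by apply: H; split; [rewrite mem_head|].
      by move=> S [Sr HS]; apply: H; split => //; rewrite in_cons Sr orbT.
    - move=> [H Ha'] S []; rewrite in_cons => /orP[/eqP -> //|Sr] HS.
      exact: H.
  by rewrite -(prob1_inter _ _ _ D _ _ (mCS a) mr Ha).
have -> : \bigcap_(S in [set S | S \in a :: r /\ D (CS S) = 1%E]) CS S =
   (\bigcap_(S in [set S | S \in r /\ D (CS S) = 1%E]) CS S).
  apply/seteqP; split => z /=.
  - by move=> H S [Sr HS]; apply: H; split => //; rewrite in_cons Sr orbT.
  - move=> H S []; rewrite in_cons => /orP[/eqP -> //|Sr] HS; exact: H.
exact: IH.
Qed.

Definition Sk : set (inp x0 k * R)%type := [set z : inp x0 k * R | forall i, z.1 i \in seen D].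

Lemma mSk : measurable Sk.
Proof.
have -> : Sk = [set x : inp x0 k | forall i, x i \in seen D] `*` setT.
  by apply/seteqP; split => z /=; [move=> H; split|case].
exact: measurableX.
Qed.

Lemma DSk : D Sk = 1%E.
Proof.
rewrite -(inter1 (enum {set X})); congr (D _).
apply/seteqP; split => z /=.
- move=> H S [_ HS] i; have := H i.
  by rewrite inE => /forallP/(_ S)/implyP; apply; apply/eqP.
- move=> H i; rewrite inE; apply/forallP => S; apply/implyP => /eqP HS.
  by apply: (H S) => //; split => //; rewrite mem_enum.
Qed.

Definition Good : set Omega := \bigcap_(s in [set s | (1 <= s <= t)%N]) Z s @^-1` Sk.

Lemma mGood : measurable Good.
Proof.
apply: bigcap_measurableType => s _.
by rewrite -[X in measurable X]setTI; apply: mZ => //; exact: mSk.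
Qed.

Lemma PrGood : Pr Good = 1%E.
Proof.
have := Hind (fun _ => setT) (fun _ => Sk) (fun _ => measurableT) (fun _ => mSk).
have -> : \bigcap_(p in [set: P]) theta0 p @^-1` setT = setT.
  by apply/seteqP; split.
rewrite setTI => ->.
rewrite big1 ?mul1e; last by move=> p _; rewrite preimage_setT probability_setT.
rewrite (@eq_big_nat _ _ _ _ _ _ (fun _ => 1%E)); first by rewrite big1.
move=> s /andP[s1 st]; rewrite HZ ?DSk //; last exact: mSk.
by rewrite s1 -ltnS.
Qed.


Definition outx (x : inp x0 k) (w : Omega) : R :=
  f_mlp phi (sgd phi (fun p => theta0 p w) eta (fun s => Z s w) t) x.

Lemma agree_good w : Good w -> outx x1 w = Hf (PhiG thS w).
Proof.
move=> Gw.
have Hs : forall s, (1 <= s <= t)%N -> swapx X x0 k x1 x2 (Z s w).1 = (Z s w).1.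
  move=> s st; apply/ffunP => i; rewrite ffunE swD //.
  - apply/eqP => e; have := Gw s st i; rewrite /= e.
    by rewrite (negPf (Hx1 i)).
  - apply/eqP => e; have := Gw s st i; rewrite /= e.
    by rewrite (negPf (Hx2 i)).
have E := sgd_sig R X x0 k d L phi x1 x2 (fun p => theta0 p w) eta (fun s => Z s w) t Hs.
transitivity (f_mlp phi (sgd phi ((fun p => theta0 p w) \o sg) eta (fun s => Z s w) t) x2);
  last by [].
by rewrite E f_sig swapx2.
Qed.

Lemma part1 B : measurable B -> Pr (outx x1 @^-1` B) = Pr (outx x2 @^-1` B).
Proof.
move=> mB.
have mo1 := mout _ mth x1.
have moS := mout _ mthS x2.
rewrite (prob1_inter _ _ _ Pr _ _ mGood (mpre _ _ _ mo1 _ mB) PrGood).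
have -> : outx x1 @^-1` B `&` Good =
   (fun w => Hf (PhiG thS w)) @^-1` B `&` Good.
  apply/seteqP; split => w /= [Bw Gw]; split => //.
  - by rewrite -agree_good.
  - by rewrite agree_good.
rewrite -(prob1_inter _ _ _ Pr _ _ mGood (mpre _ _ _ moS _ mB) PrGood).
have mHB : measurable (Hf @^-1` B) by exact: (mpre _ _ _ mHf _ mB).
have := law _ mHB.
by move=> /esym.
Qed.

Definition mkmfR (f : Omega -> R) (mf : measurable_fun setT f) : {mfun Omega >-> R} :=
  MeasurableFun.Pack (MeasurableFun.Class (isMeasurableFun.Build _ _ _ _ f mf)).

Lemma part2 : Pr.-integrable setT (EFin \o outx x1) ->
   Pr.-integrable setT (EFin \o outx x2) ->
   (\int[Pr]_w (outx x1 w)%:E = \int[Pr]_w (outx x2 w)%:E)%E.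
Proof.
move=> i1 i2.
have mo1 := mout _ mth x1.
have mo2 := mout _ mth x2.
have i1' : Pr.-integrable (outx x1 @^-1` setT) (EFin \o outx x1) by rewrite preimage_setT.
have i2' : Pr.-integrable (outx x2 @^-1` setT) (EFin \o outx x2) by rewrite preimage_setT.
have e1 := integral_pushforward mo1 (@measurable_realfun.EFin_measurable R setT) i1' measurableT.
have e2 := integral_pushforward mo2 (@measurable_realfun.EFin_measurable R setT) i2' measurableT.
rewrite preimage_setT in e1; rewrite preimage_setT in e2.
transitivity (\int[distribution Pr (mkmfR _ mo1)]_y (y%:E))%E; first by rewrite e1.
transitivity (\int[distribution Pr (mkmfR _ mo2)]_y (y%:E))%E; last by rewrite e2.
apply: eq_measure_integral => A mA _.
exact: (part1 _ mA).
Qed.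

End Main.

Theorem mainTheorem15
  (R : realType) (X : finType) (x0 : X) (k d L : nat) (phi : R -> R)
  (dO : measure_display) (Omega : measurableType dO)
  (Pr : probability Omega R)
  (D : probability (inp x0 k * R)%type R)
  (mu1 : R) (muh : 'I_L.-1 -> R) (muw : R)
  (sd1 : R) (sdh : 'I_L.-1 -> R) (sdw : R)
  (theta0 : pidx X k d L -> Omega -> R)
  (Z : nat -> Omega -> (inp x0 k * R)%type)
  (t : nat) (eta : nat -> R) (x1 x2 : inp x0 k) :
  (1 <= L)%N ->
  (forall u, derivable phi u 1) ->
  (forall p, @blockwise R X k d L sd1 sdh sdw p != 0) ->
  (forall p, measurable_fun setT (theta0 p)) ->
  (forall s, measurable_fun setT (Z s)) ->
  (forall p (B : set R), measurable B ->
     Pr (theta0 p @^-1` B) =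
     normal_prob (@blockwise R X k d L mu1 muh muw p) (@blockwise R X k d L sd1 sdh sdw p) B) ->
  (forall s, (1 <= s <= t)%N -> forall B : set (inp x0 k * R)%type,
     measurable B -> Pr (Z s @^-1` B) = D B) ->
  (forall (A : pidx X k d L -> set R) (B : nat -> set (inp x0 k * R)%type),
     (forall p, measurable (A p)) -> (forall s, measurable (B s)) ->
     Pr ((\bigcap_(p in [set: pidx X k d L]) theta0 p @^-1` A p) `&`
         (\bigcap_(s in [set s | (1 <= s <= t)%N]) Z s @^-1` B s)) =
     ((\prod_(p : pidx X k d L) Pr (theta0 p @^-1` A p)) *
      (\prod_(1 <= s < t.+1) Pr (Z s @^-1` B s)))%E) ->
  (forall s, (1 <= s <= t)%N -> 0 < eta s) ->
  (forall i, x1 i \notin seen D) ->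
  (forall i, x2 i \notin seen D) ->
  let out x := fun w : Omega =>
    @f_mlp R X x0 k d L phi (@sgd R X x0 k d L phi (fun p => theta0 p w) eta (fun s => Z s w) t) x in
  (forall B : set R, measurable B ->
     Pr (out x1 @^-1` B) = Pr (out x2 @^-1` B)) /\
  (Pr.-integrable setT (EFin \o out x1) ->
   Pr.-integrable setT (EFin \o out x2) ->
   (\int[Pr]_w (out x1 w)%:E = \int[Pr]_w (out x2 w)%:E)%E).
Proof.
move=> _ Hphi _ mth mZ Hth HZ Hind _ Hx1 Hx2 out; split.
- move=> B mB.
  by apply: part1 => //; [exact: Hth | exact: HZ].
- move=> i1 i2.
  by apply: part2 => //; [exact: Hth | exact: HZ].
Qed.
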